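(* Under the Standing Setting, the iterates of D$^4$L satisfy $\lim_{\nu\to\infty}\|\mathbf D^\nu-\mathbf 1\otimes\overline{\mathbf D}_{\boldsymbol\phi^\nu}\|_F=0$, $\sum_{t=1}^{\infty}\|\mathbf D^t-\mathbf 1\otimes\overline{\mathbf D}_{\boldsymbol\phi^t}\|_F^2<\infty$, and $\sum_{t=1}^{\infty}\|\mathbf U^t-\mathbf 1\otimes\overline{\mathbf U}_{\boldsymbol\phi^t}\|_F^2<\infty$.
   Context: Problem (P). Fix positive integers $I,M,K,n_1,\dots,n_I$. Variables: $\mathbf D\in\mathbb R^{M\times K}$ and $\mathbf X_i\in\mathbb R^{K\times n_i}$, $\mathbf X=[\mathbf X_1,\dots,\mathbf X_I]$. Problem (P) is: minimize $U(\mathbf D,\mathbf X)=F(\mathbf D,\mathbf X)+\sum_{i=1}^I g_i(\mathbf X_i)+G(\mathbf D)$, where $F(\mathbf D,\mathbf X)=\sum_{i=1}^I f_i(\mathbf D,\mathbf X_i)$, subject to $\mathbf D\in\mathcal D$, $\mathbf X_i\in\mathcal X_i$, $i=1,\dots,I$. Notation: $\langle\mathbf A,\mathbf B\rangle=\mathrm{tr}(\mathbf A^\top\mathbf B)$, $\|\cdot\|_F$ is the Frobenius norm; $\nabla_D$, $\nabla_{X_i}$ denote partial gradients arranged as matrices of the shapes of $\mathbf D$, $\mathbf X_i$. Assumption (A): (A1) each $f_i:\mathcal O\times\mathcal O_i\to\mathbb R$ is $C^2$, bounded below, and biconvex (convex in $\mathbf D$ for fixed $\mathbf X_i$ and convex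 in $\mathbf X_i$ for fixed $\mathbf D$), where $\mathcal O\supseteq\mathcal D$, $\mathcal O_i\supseteq\mathcal X_i$ are open convex sets; (A2) for every $\mathbf D\in\mathcal D$, $\nabla_{X_i}f_i(\mathbf D,\cdot)$ is Lipschitz on $\mathcal X_i$ with constant $L_{\nabla X_i}(\mathbf D)$, and $L_{\nabla X_i}:\mathcal D\to\mathbb R$ is continuous; (A3) $\mathcal D$ is nonempty, compact and convex, and each $\mathcal X_i$ is nonempty, closed and convex; (A4) $G:\mathcal O\to\mathbb R$ is convex (possibly nonsmooth); (A5) for each $i$, either (i) $\mathcal X_i$ is compact and $g_i:\mathcal O_i\to\mathbb R$ is convex, or (ii) $g_i$ is $\mu_i$-strongly convex ($\mu_i>0$). Network: at each time $\nu\in\mathbb N_+$ there is a digraph $\mathcal G^\nu=(\{1,\dots,I\},\mathcal E^\nu)$; $(j,i)\in\mathcal E^\nu$ means a link from $j$ to $i$; $\mathcal N_i^{\rm in}[\nu]=\{j:(j,i)\in\mathcal E^\nu\}\cup\{i\}$. B-strong connectivity: there is an integer $B>0$ such that for all $k\ge0$ the digraph with edge set $\bigcup_{t=kB}^{(k+1)B-1}\mathcal E^t$ is strongly connected. Weights: matrices $\mathbf A^\nu=(a^\nu_{ij})\in\mathbb R^{I\times I}$ with, for some $\kappa>0$, $a^\nu_{ii}\ge\kappa$; $a^\nu_{ij}\ge\kappa$ if $(j,i)\in\mathcal E^\nu$ and $a^\nu_{ij}=0$ otherwise ($j\ne i$); and $\mathbf 1^\top\mathbf A^\nu=\mathbf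 1^\top$. D$^4$L algorithm. Initialize $\phi_i^0=1$, $\mathbf D^0_{(i)}\in\mathcal D$, $\mathbf X_i^0\in\mathcal X_i$, $\boldsymbol\Theta^0_{(i)}=\nabla_Df_i(\mathbf D^0_{(i)},\mathbf X^0_i)$. For $\nu=0,1,\dots$, each agent $i$ computes $\widetilde{\mathbf D}^\nu_{(i)}=\arg\min_{\mathbf D\in\mathcal D}\ \tilde f_i(\mathbf D;\mathbf D^\nu_{(i)},\mathbf X^\nu_i)+\langle I\boldsymbol\Theta^\nu_{(i)}-\nabla_Df_i(\mathbf D^\nu_{(i)},\mathbf X^\nu_i),\mathbf D-\mathbf D^\nu_{(i)}\rangle+G(\mathbf D)$; $\mathbf U^\nu_{(i)}=\mathbf D^\nu_{(i)}+\gamma^\nu(\widetilde{\mathbf D}^\nu_{(i)}-\mathbf D^\nu_{(i)})$; $\mathbf X_i^{\nu+1}=\arg\min_{\mathbf X_i\in\mathcal X_i}\ \tilde h_i(\mathbf X_i;\mathbf U^\nu_{(i)},\mathbf X^\nu_i)+g_i(\mathbf X_i)$; $\phi_i^{\nu+1}=\sum_{j\in\mathcal N_i^{\rm in}[\nu]}a^\nu_{ij}\phi^\nu_j$; $\mathbf D^{\nu+1}_{(i)}=\frac{1}{\phi_i^{\nu+1}}\sum_{j\in\mathcal N_i^{\rm in}[\nu]}a^\nu_{ij}\phi^\nu_j\mathbf U^\nu_{(j)}$; $\boldsymbol\Theta^{\nu+1}_{(i)}=\frac{1}{\phi_i^{\nu+1}}\sum_{j\in\mathcal N_i^{\rm in}[\nu]}a^\nu_{ij}\phi^\nu_j\boldsymbol\Theta^\nu_{(j)}+\frac{1}{\phi_i^{\nu+1}}\big(\nabla_Df_i(\mathbf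 D^{\nu+1}_{(i)},\mathbf X^{\nu+1}_i)-\nabla_Df_i(\mathbf D^{\nu}_{(i)},\mathbf X^{\nu}_i)\big)$. Assumption (S) (surrogates): for each $i$, $\tilde f_i(\mathbf D;\mathbf D^\nu_{(i)},\mathbf X^\nu_i)$ is either $f_i(\mathbf D,\mathbf X^\nu_i)+\frac{\tau^\nu_{D,i}}2\|\mathbf D-\mathbf D^\nu_{(i)}\|_F^2$ or $\langle\nabla_Df_i(\mathbf D^\nu_{(i)},\mathbf X^\nu_i),\mathbf D-\mathbf D^\nu_{(i)}\rangle+\frac{\tau^\nu_{D,i}}2\|\mathbf D-\mathbf D^\nu_{(i)}\|_F^2$; and $\tilde h_i(\mathbf X_i;\mathbf U^\nu_{(i)},\mathbf X^\nu_i)$ is either $f_i(\mathbf U^\nu_{(i)},\mathbf X_i)+\frac{\tau^\nu_{X,i}}2\|\mathbf X_i-\mathbf X^\nu_i\|_F^2$ or $\langle\nabla_{X_i}f_i(\mathbf U^\nu_{(i)},\mathbf X^\nu_i),\mathbf X_i-\mathbf X^\nu_i\rangle+\frac{\tau^\nu_{X,i}}2\|\mathbf X_i-\mathbf X^\nu_i\|_F^2$, with $\tau^\nu_{D,i},\tau^\nu_{X,i}>0$. Assumption (T1): for all $i$, $0<\inf_\nu\tau^\nu_{D,i}\le\sup_\nu\tau^\nu_{D,i}<\infty$, $\sup_\nu\tau^\nu_{X,i}<\infty$, and $\tau^\nu_{X,i}\ge\frac12L_{\nabla X_i}(\mathbf U^\nu_{(i)})+\epsilon$ for all $\nu\ge1$,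 for a fixed $\epsilon>0$. Step-size assumption: $\gamma^\nu\in(0,1]$, $\sum_\nu\gamma^\nu=\infty$, $\sum_\nu(\gamma^\nu)^2<\infty$. Standing Setting: Assumption (A), B-strong connectivity, the weight conditions above, Assumption (S), Assumption (T1), and the step-size assumption. Notation: $\mathbf D^\nu\in\mathbb R^{MI\times K}$ and $\mathbf U^\nu\in\mathbb R^{MI\times K}$ are the vertical stacks of $\mathbf D^\nu_{(1)},\dots,\mathbf D^\nu_{(I)}$ and of $\mathbf U^\nu_{(1)},\dots,\mathbf U^\nu_{(I)}$; $\mathbf 1\otimes\mathbf Y$ is the vertical stack of $I$ copies of $\mathbf Y$; weighted averages $\overline{\mathbf D}_{\boldsymbol\phi^\nu}=\frac1I\sum_{i=1}^I\phi_i^\nu\mathbf D^\nu_{(i)}$ and $\overline{\mathbf U}_{\boldsymbol\phi^\nu}=\frac1I\sum_{i=1}^I\phi_i^\nu\mathbf U^\nu_{(i)}$. *)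

(* Defs.v *)
From Stdlib Require Import Reals Relations.
From mathcomp Require Import all_boot.
Set Implicit Arguments. Unset Strict Implicit. Unset Printing Implicit Defensive.
Open Scope R_scope.

Notation Mat m n := (('I_m * 'I_n)%type -> R).

Definition ip {T : finType} (x y : T -> R) : R :=
  \big[Rplus/R0]_(t : T) (x t * y t).
Definition nrm {T : finType} (x : T -> R) : R := sqrt (ip x x).
Definition vadd {T : Type} (x y : T -> R) : T -> R := fun t => x t + y t.
Definition vsub {T : Type} (x y : T -> R) : T -> R := fun t => x t - y t.
Definition vscal {T : Type} (a : R) (x : T -> R) : T -> R := fun t => a * x t.
Definition vsum {J : finType} {T : Type} (P : pred J) (F : J -> T -> R) : T -> R :=
  fun t => \big[Rplus/R0]_(j | P j) F j t.

Definition vopen_set {T : finType} (S : (T -> R) -> Prop) : Prop :=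
  forall x, S x -> exists e, 0 < e /\ forall y, nrm (vsub y x) < e -> S y.
Definition vclosed_set {T : finType} (S : (T -> R) -> Prop) : Prop :=
  vopen_set (fun x => ~ S x).
Definition vcompact_set {T : finType} (S : (T -> R) -> Prop) : Prop :=
  forall (Idx : Type) (Uc : Idx -> (T -> R) -> Prop),
    (forall k, vopen_set (Uc k)) ->
    (forall x, S x -> exists k, Uc k x) ->
    exists l : list Idx, forall x, S x -> exists k, List.In k l /\ Uc k x.
Definition vconvex_set {T : Type} (S : (T -> R) -> Prop) : Prop :=
  forall x y t, S x -> S y -> 0 <= t <= 1 ->
    S (vadd (vscal t x) (vscal (1 - t) y)).
Definition convex_on {T : Type} (S : (T -> R) -> Prop) (h : (T -> R) -> R) : Prop :=
  forall x y t, S x -> S y -> 0 <= t <= 1 ->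
    h (vadd (vscal t x) (vscal (1 - t) y)) <= t * h x + (1 - t) * h y.
Definition strongly_convex_on {T : finType} (S : (T -> R) -> Prop) (mu : R)
    (h : (T -> R) -> R) : Prop :=
  forall x y t, S x -> S y -> 0 <= t <= 1 ->
    h (vadd (vscal t x) (vscal (1 - t) y))
      <= t * h x + (1 - t) * h y - mu / 2 * t * (1 - t) * (nrm (vsub x y)) ^ 2.
Definition cont_on {T : finType} (S : (T -> R) -> Prop) (h : (T -> R) -> R) : Prop :=
  forall x, S x -> forall e, 0 < e -> exists d, 0 < d /\
    forall y, S y -> nrm (vsub y x) < d -> Rabs (h y - h x) < e.

Definition upd {T : eqType} (x : T -> R) (t : T) (s : R) : T -> R :=
  fun u => if u == t then s else x u.
Definition has_partial {T : eqType} (F : (T -> R) -> R) (x : T -> R) (t : T) (l : R) : Prop :=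
  derivable_pt_lim (fun s => F (upd x t s)) (x t) l.
Definition C2_on {T : finType} (S : (T -> R) -> Prop) (F : (T -> R) -> R) : Prop :=
  exists (d1 : T -> (T -> R) -> R) (d2 : T -> T -> (T -> R) -> R),
    (forall x, S x -> forall t, has_partial F x t (d1 t x)) /\
    (forall x, S x -> forall t u, has_partial (d1 t) x u (d2 t u x)) /\
    (forall t, cont_on S (d1 t)) /\
    (forall t u, cont_on S (d2 t u)).

(* joint variable (D, X) as a single vector indexed by a sum type *)
Definition lpart {T1 T2 : finType} (z : (T1 + T2)%type -> R) : T1 -> R := fun t => z (inl t).
Definition rpart {T1 T2 : finType} (z : (T1 + T2)%type -> R) : T2 -> R := fun t => z (inr t).
Definition joint {T1 T2 : finType} (F : (T1 -> R) -> (T2 -> R) -> R)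
  : ((T1 + T2)%type -> R) -> R := fun z => F (lpart z) (rpart z).

Definition is_argmin {T : Type} (S : (T -> R) -> Prop) (obj : (T -> R) -> R) (x : T -> R) : Prop :=
  S x /\ forall y, S y -> obj x <= obj y.

Definition strongly_connected {N : Type} (e : N -> N -> Prop) : Prop :=
  forall u v, clos_refl_trans N e u v.

(* vertical stack of the I blocks Ds 1, ..., Ds I (each M x K): an (MI) x K matrix
   whose rows are indexed by pairs (i, m) (block i, row m within the block) *)
Definition stack {I M K : nat} (Ds : 'I_I -> Mat M K) : (('I_I * 'I_M) * 'I_K)%type -> R :=
  fun p => Ds p.1.1 (p.1.2, p.2).
(* 1 (x) Y : I stacked copies of Y *)
Definition kron1 {I M K : nat} (Y : Mat M K) : (('I_I * 'I_M) * 'I_K)%type -> R :=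
  stack (fun _ : 'I_I => Y).
Definition wavg {I : nat} {T : Type} (phi : 'I_I -> R) (Ds : 'I_I -> T -> R) : T -> R :=
  vscal (/ INR I) (vsum predT (fun j => vscal (phi j) (Ds j))).

(* Main.v *)
Require Import Defs.
From HB Require Import structures.
From Stdlib Require Import Reals Relations Lra Lia ClassicalEpsilon.
From mathcomp Require Import all_boot zify.
Open Scope R_scope.

Lemma Rplus_assoc' : associative Rplus. Proof. intros a b c; ring. Qed.
HB.instance Definition _ := Monoid.isComLaw.Build R 0 Rplus Rplus_assoc' Rplus_comm Rplus_0_l.




Ltac fixR := try change (@Monoid.Law.sort R (IZR Z0) _) with Rplus in *;
  try change (@Monoid.ComLaw.sort R (IZR Z0) _) with Rplus in *;
  try change (@Monoid.Law.sort R R0 _) with Rplus in *;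
  try change (@Monoid.ComLaw.sort R R0 _) with Rplus in *;
  try change (@SemiGroup.ComLaw.sort R _) with Rplus in *;
  try change (@SemiGroup.Law.sort R _) with Rplus in *.

Lemma sum_le (T : Type) (r : seq T) (P : pred T) (F G : T -> R) :
  (forall t, P t -> F t <= G t) ->
  \big[Rplus/0]_(t <- r | P t) F t <= \big[Rplus/0]_(t <- r | P t) G t.
Proof.
move=> H; apply: (big_ind2 (fun x y => x <= y)); [lra| |by []].
move=> *; lra.
Qed.

Lemma sum_ge0 (T : Type) (r : seq T) (P : pred T) (F : T -> R) :
  (forall t, P t -> 0 <= F t) -> 0 <= \big[Rplus/0]_(t <- r | P t) F t.
Proof.
move=> H; apply: (big_ind (fun x => 0 <= x)); [lra| |by []].
move=> *; lra.
Qed.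

Lemma sum_scal (T : Type) (r : seq T) (P : pred T) (F : T -> R) c :
  \big[Rplus/0]_(t <- r | P t) (c * F t) = c * \big[Rplus/0]_(t <- r | P t) F t.
Proof.
apply: (big_rec2 (fun x y => x = c * y)); first ring.
by move=> i y1 y2 _ ->; ring.
Qed.

Lemma sum_opp (T : Type) (r : seq T) (P : pred T) (F : T -> R) :
  \big[Rplus/0]_(t <- r | P t) (- F t) = - \big[Rplus/0]_(t <- r | P t) F t.
Proof.
apply: (big_rec2 (fun x y => x = - y)); first ring.
by move=> i y1 y2 _ ->; ring.
Qed.

Lemma sum_abs (T : Type) (r : seq T) (P : pred T) (F : T -> R) :
  Rabs (\big[Rplus/0]_(t <- r | P t) F t) <= \big[Rplus/0]_(t <- r | P t) Rabs (F t).
Proof.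
apply: (big_rec2 (fun x y => Rabs x <= y)); first by rewrite Rabs_R0; lra.
move=> i y1 y2 _ H; apply: Rle_trans (Rabs_triang _ _) _; lra.
Qed.

Lemma sum_f_big (f : nat -> R) N : sum_f_R0 f N = \big[Rplus/0]_(0 <= t < N.+1) f t.
Proof.
elim: N => [|N IH]; first by rewrite big_nat1 /=.
by rewrite big_nat_recr //= -IH.
Qed.

Lemma sum_shift_le (g : nat -> R) (G : R) r N :
  (forall t, 0 <= g t) -> (forall N, \big[Rplus/0]_(0 <= t < N) g t <= G) ->
  \big[Rplus/0]_(0 <= t < N) g (t + r)%nat <= G.
Proof.
move=> g0 HG.
have -> : \big[Rplus/0]_(0 <= t < N) g (t + r)%nat = \big[Rplus/0]_(r <= t < N + r) g t.
  by have := big_addn 0 (N + r) r predT g; rewrite add0n addnK => ->.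
apply: Rle_trans (HG (N + r)%nat).
rewrite [X in _ <= X](big_cat_nat _ (n := r)) //; last by rewrite leq_addl.
have := @sum_ge0 nat (index_iota 0 r) predT g (fun t _ => g0 t). simpl. lra.
Qed.

Lemma sq_sum_le (x : nat -> R) L :
  (\big[Rplus/0]_(0 <= r < L) x r) ^ 2 <= INR L * \big[Rplus/0]_(0 <= r < L) (x r ^ 2).
Proof.
elim: L => [|L IH]; first by rewrite !big_nil /=; lra.
rewrite !big_nat_recr // [INR _]S_INR; fixR.
move: IH.
set S := \big[Rplus/0]_(0 <= i < L) x i.
set Q := \big[Rplus/0]_(0 <= i < L) x i ^ 2.
move=> IH.
have Q0 : 0 <= Q by apply: sum_ge0 => t _; nra.
have hL0 : 0 <= INR L by apply: pos_INR.
case: (Req_dec (INR L) 0) => hL.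
  have S0 : S = 0.
    rewrite hL in IH. have : S ^ 2 <= 0 by lra. nra.
  rewrite S0 hL. nra.
have hLp : 0 < INR L by lra.
have : 2 * S * x L <= Q + INR L * x L ^ 2.
  have h2 : S ^ 2 / INR L <= Q.
    have e : S ^ 2 / INR L = S ^ 2 * / INR L by [].
    have : S ^ 2 <= INR L * Q by [].
    have hi : 0 < / INR L by apply Rinv_0_lt_compat.
    have : S ^ 2 * / INR L <= INR L * Q * / INR L by nra.
    have -> : INR L * Q * / INR L = Q by field; lra.
    lra.
  have : 2 * S * x L <= S ^ 2 / INR L + INR L * x L ^ 2.
    have e : S ^ 2 / INR L + INR L * x L ^ 2 - 2 * S * x L = (S - INR L * x L) ^ 2 / INR L.
      by field; lra.
    have : 0 <= (S - INR L * x L) ^ 2 / INR L.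
      apply Rmult_le_pos; [apply pow2_ge_0 | apply Rlt_le, Rinv_0_lt_compat; lra].
    lra.
  lra.
nra.
Qed.

Lemma sqineq (rho a b : R) : 0 <= rho < 1 -> 0 <= a ->
  (rho * a + b) ^ 2 <= rho * (1 + rho) / 2 * a ^ 2 + (1 + 2 * rho / (1 - rho)) * b ^ 2.
Proof.
move=> [h0 h1] ha.
have h : 2 * a * b <= (1 - rho) / 2 * a ^ 2 + 2 / (1 - rho) * b ^ 2.
  have e : (1 - rho) / 2 * a ^ 2 + 2 / (1 - rho) * b ^ 2 - 2 * a * b
     = ((1 - rho) * a - 2 * b) ^ 2 / (2 * (1 - rho)) by field; lra.
  have : 0 <= ((1 - rho) * a - 2 * b) ^ 2 / (2 * (1 - rho)).
    apply Rmult_le_pos; [apply pow2_ge_0 | apply Rlt_le, Rinv_0_lt_compat; lra].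
  lra.
have : rho * (2 * a * b) <= rho * ((1 - rho) / 2 * a ^ 2 + 2 / (1 - rho) * b ^ 2) by nra.
have e1 : rho * ((1 - rho) / 2 * a ^ 2 + 2 / (1 - rho) * b ^ 2) =
   rho * (1 - rho) / 2 * a ^ 2 + 2 * rho / (1 - rho) * b ^ 2 by field; lra.
nra.
Qed.

Lemma sum_const_nat (c : R) a b :
  \big[Rplus/0]_(a <= r < b) c = INR (b - a) * c.
Proof.
rewrite big_const_nat. elim: (b - a)%nat => [|k IH]; first by simpl; ring.
rewrite S_INR /= IH; ring.
Qed.

Lemma sq_le (x y : R) : 0 <= x -> x <= y -> x ^ 2 <= y ^ 2.
Proof. move=> *; nra. Qed.

Lemma series_main (s g : nat -> R) (L : nat) (rho K0 C0 G : R) :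
  (0 < L)%nat -> 0 <= rho < 1 -> 0 <= K0 ->
  (forall t, 0 <= s t <= C0) -> (forall t, 0 <= g t) ->
  (forall N, \big[Rplus/0]_(0 <= t < N) g t ^ 2 <= G) ->
  (forall t, s (t + L)%nat <= rho * s t + K0 * \big[Rplus/0]_(0 <= r < L) g (t + r)%nat) ->
  exists Cst, forall N, \big[Rplus/0]_(0 <= t < N) s t ^ 2 <= Cst.
Proof.
move=> L0 hrho hK hs hg hG hrec.
set q := rho * (1 + rho) / 2.
set c := 1 + 2 * rho / (1 - rho).
have hq : 0 <= q < 1 by rewrite /q; split; nra.
have hc : 0 <= c.
  rewrite /c. have : 0 <= 2 * rho / (1 - rho).
    apply Rmult_le_pos; [lra | apply Rlt_le, Rinv_0_lt_compat; lra]. lra.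
have hL : 0 <= INR L by apply pos_INR.
have step : forall t, s (t + L)%nat ^ 2 <= q * s t ^ 2 +
    c * K0 ^ 2 * INR L * \big[Rplus/0]_(0 <= r < L) g (t + r)%nat ^ 2.
  move=> t.
  have h1 := sqineq rho (s t) (K0 * \big[Rplus/0]_(0 <= r < L) g (t + r)%nat) hrho (proj1 (hs t)).
  have h2 := sq_sum_le (fun r => g (t + r)%nat) L.
  have h0 : 0 <= \big[Rplus/0]_(0 <= r < L) g (t + r)%nat by apply: sum_ge0.
  have h3 : s (t + L)%nat ^ 2 <= (rho * s t + K0 * \big[Rplus/0]_(0 <= r < L) g (t + r)%nat) ^ 2.
    apply: sq_le; [exact: (proj1 (hs _)) | exact: hrec].
  rewrite -/q -/c in h1. simpl in h2.
  have : c * (K0 * \big[Rplus/0]_(0 <= r < L) g (t + r)%nat) ^ 2 <=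
         c * K0 ^ 2 * INR L * \big[Rplus/0]_(0 <= r < L) g (t + r)%nat ^ 2.
    have -> : c * (K0 * \big[Rplus/0]_(0 <= r < L) g (t + r)%nat) ^ 2 =
      c * K0 ^ 2 * (\big[Rplus/0]_(0 <= r < L) g (t + r)%nat) ^ 2 by ring.
    have -> : c * K0 ^ 2 * INR L * \big[Rplus/0]_(0 <= r < L) g (t + r)%nat ^ 2 =
      c * K0 ^ 2 * (INR L * \big[Rplus/0]_(0 <= r < L) g (t + r)%nat ^ 2) by ring.
    apply Rmult_le_compat_l; [nra | exact h2].
  lra.
set P := fun N => \big[Rplus/0]_(0 <= t < N) s t ^ 2.
have Pmono : forall N, P N <= P (N + L)%nat.
  move=> N; have hNL : (N <= N + L)%nat by rewrite leq_addr.
  rewrite /P [X in _ <= X](big_cat_nat _ (n := N)) //.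
  have : 0 <= \big[Rplus/0]_(N <= i < N + L) s i ^ 2 by apply: sum_ge0 => t _; nra.
  fixR; lra.
have dbl : forall N, \big[Rplus/0]_(0 <= t < N) \big[Rplus/0]_(0 <= r < L) g (t + r)%nat ^ 2
    <= INR L * G.
  move=> N; rewrite exchange_big /=.
  apply: Rle_trans (_ : \big[Rplus/0]_(0 <= r < L) G <= _); last first.
    by rewrite sum_const_nat subn0; lra.
  apply: sum_le => r _. apply: (sum_shift_le (fun t => g t ^ 2)) => //.
  move=> t; nra.
have PNL : forall N, P (N + L)%nat <= INR L * C0 ^ 2 + q * P N + c * K0 ^ 2 * INR L * (INR L * G).
  move=> N; have hNL : (L <= L + N)%nat by rewrite leq_addr.
  rewrite /P addnC (big_cat_nat _ (n := L)) //.
  have -> : \big[Rplus/0]_(L <= i < L + N) s i ^ 2 = \big[Rplus/0]_(0 <= i < N) s (i + L)%nat ^ 2.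
    by have := big_addn 0 (L + N) L predT (fun i => s i ^ 2); rewrite add0n addKn => ->.
  have a1 : \big[Rplus/0]_(0 <= i < L) s i ^ 2 <= INR L * C0 ^ 2.
    apply: Rle_trans (_ : \big[Rplus/0]_(0 <= i < L) (C0 ^ 2) <= _).
      apply: sum_le => t _; apply: sq_le; apply (hs t).
    by rewrite sum_const_nat subn0; lra.
  have a2 : \big[Rplus/0]_(0 <= i < N) s (i + L)%nat ^ 2 <=
     \big[Rplus/0]_(0 <= i < N) (q * s i ^ 2 +
         c * K0 ^ 2 * INR L * \big[Rplus/0]_(0 <= r < L) g (i + r)%nat ^ 2).
    by apply: sum_le => t _; apply: step.
  rewrite big_split sum_scal sum_scal in a2. fixR.
  have := dbl N. have : 0 <= c * K0 ^ 2 * INR L.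
    apply Rmult_le_pos; [|lra]. apply Rmult_le_pos; [lra|nra].
  move=> hh hd.
  have : c * K0 ^ 2 * INR L * \big[Rplus/0]_(0 <= t < N) \big[Rplus/0]_(0 <= r < L) g (t + r)%nat ^ 2
     <= c * K0 ^ 2 * INR L * (INR L * G) by apply Rmult_le_compat_l.
  move=> ?; lra.
exists ((INR L * C0 ^ 2 + c * K0 ^ 2 * INR L * (INR L * G)) / (1 - q)).
move=> N.
have := PNL N; have := Pmono N; rewrite -/(P N) => h1 h2.
have : (1 - q) * P N <= INR L * C0 ^ 2 + c * K0 ^ 2 * INR L * (INR L * G) by lra.
move=> h3.
apply (Rmult_le_reg_l (1 - q)); first lra.
have -> : (1 - q) * ((INR L * C0 ^ 2 + c * K0 ^ 2 * INR L * (INR L * G)) / (1 - q)) =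
   INR L * C0 ^ 2 + c * K0 ^ 2 * INR L * (INR L * G) by field; lra.
exact h3.
Qed.

Definition Tm {I : nat} (E : nat -> 'I_I -> 'I_I -> bool) (A : nat -> 'I_I -> 'I_I -> R)
  nu (y : 'I_I -> R) (i : 'I_I) : R :=
  \big[Rplus/0]_(j | E nu j i || (j == i)) (A nu i j * y j).

Record netH (I : nat) (E : nat -> 'I_I -> 'I_I -> bool) (A : nat -> 'I_I -> 'I_I -> R)
  (kappa : R) : Prop := NetH {
  nk : 0 < kappa;
  ndiag : forall nu i, kappa <= A nu i i;
  nedge : forall nu i j, j <> i -> E nu j i -> kappa <= A nu i j;
  nnon : forall nu i j, j <> i -> ~ E nu j i -> A nu i j = 0;
  ncol : forall nu j, \big[Rplus/R0]_(i : 'I_I) A nu i j = 1 }.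
Arguments nk {I E A kappa}. Arguments ndiag {I E A kappa}. Arguments nedge {I E A kappa}.
Arguments nnon {I E A kappa}. Arguments ncol {I E A kappa}.

Lemma A_nonneg {I E A kappa} (H : @netH I E A kappa) nu i j : 0 <= A nu i j.
Proof.
have k0 := nk H.
case: (eqVneq j i) => [->|ne]; first by have := ndiag H nu i; lra.
have ne' : j <> i by move/eqP: ne.
case: (boolP (E nu j i)) => e.
  by have := nedge H nu i j ne' e; lra.
by rewrite (nnon H nu i j ne' (negP e)); lra.
Qed.

Lemma Tm_full {I E A kappa} (H : @netH I E A kappa) nu y i :
  Tm E A nu y i = \big[Rplus/0]_j (A nu i j * y j).
Proof.
rewrite /Tm big_mkcond /=; apply: eq_bigr => j _.
case: ifP => // /negbT; rewrite negb_or => /andP [e ne].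
by rewrite (nnon H nu i j); [ring| apply/eqP | apply/negP].
Qed.

Lemma Tm_lin {I E A kappa} (H : @netH I E A kappa) nu y z a b i :
  Tm E A nu (fun l => a * y l + b * z l) i = a * Tm E A nu y i + b * Tm E A nu z i.
Proof.
rewrite !(Tm_full H) -!sum_scal -big_split /=; apply: eq_bigr => j _; fixR; ring.
Qed.

Lemma Tm_mono {I E A kappa} (H : @netH I E A kappa) nu y z i :
  (forall l, y l <= z l) -> Tm E A nu y i <= Tm E A nu z i.
Proof.
move=> h; apply: sum_le => j _; apply: Rmult_le_compat_l; [exact: A_nonneg H _ _ _|exact: h].
Qed.

Lemma Tm_nonneg {I E A kappa} (H : @netH I E A kappa) nu y i :
  (forall l, 0 <= y l) -> 0 <= Tm E A nu y i.
Proof.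
move=> h; apply: sum_ge0 => j _; apply: Rmult_le_pos; [exact: A_nonneg H _ _ _|exact: h].
Qed.

Lemma Tm_sum {I E A kappa} (H : @netH I E A kappa) nu y :
  \big[Rplus/0]_i Tm E A nu y i = \big[Rplus/0]_j y j.
Proof.
under eq_bigr => i _ do rewrite (Tm_full H).
rewrite exchange_big /=; apply: eq_bigr => j _.
have := @sum_scal _ (index_enum 'I_I) predT (fun i => A nu i j) (y j).
under eq_bigr => i _ do rewrite Rmult_comm.
move=> ->; rewrite (ncol H); ring.
Qed.

Lemma Tm_abs {I E A kappa} (H : @netH I E A kappa) nu y :
  \big[Rplus/0]_i Rabs (Tm E A nu y i) <= \big[Rplus/0]_j Rabs (y j).
Proof.
apply: Rle_trans (_ : \big[Rplus/0]_i Tm E A nu (fun l => Rabs (y l)) i <= _); last first.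
  by rewrite (Tm_sum H); lra.
apply: sum_le => i _; rewrite !(Tm_full H).
apply: Rle_trans (sum_abs _ _ _ _) _; apply: sum_le => j _.
rewrite Rabs_mult Rabs_pos_eq; [lra|exact: A_nonneg H _ _ _].
Qed.

Lemma Tm_ge {I E A kappa} (H : @netH I E A kappa) nu y i u :
  (forall l, 0 <= y l) -> (E nu u i || (u == i)) -> kappa * y u <= Tm E A nu y i.
Proof.
move=> h hu; rewrite /Tm (bigD1 u) //; fixR.
have : 0 <= \big[Rplus/0]_(j | (E nu j i || (j == i)) && (j != u)) (A nu i j * y j).
  apply: sum_ge0 => j _; apply: Rmult_le_pos; [exact: A_nonneg H _ _ _|exact: h].
have : kappa <= A nu i u.
  case: (eqVneq u i) => [->|ne]; first exact: ndiag H _ _.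
  move: hu; rewrite (negbTE ne) orbF => e; apply: (nedge H nu i u) e; exact/eqP.
have := h u. move=> *; fixR; nra.
Qed.

Fixpoint iterT {I : nat} (E : nat -> 'I_I -> 'I_I -> bool) (A : nat -> 'I_I -> 'I_I -> R)
  (s k : nat) (y : 'I_I -> R) : 'I_I -> R :=
  match k with 0 => y | k'.+1 => Tm E A (s + k')%nat (iterT E A s k' y) end.

Lemma iterT_nonneg {I E A kappa} (H : @netH I E A kappa) s k y :
  (forall l, 0 <= y l) -> forall i, 0 <= iterT E A s k y i.
Proof. move=> h; elim: k => [|k IH] i //=; exact: Tm_nonneg H _ _ _ IH. Qed.

Definition Reach {I : nat} E A (kappa : R) (s k : nat) (j i : 'I_I) : Prop :=
  forall y, (forall l, 0 <= y l) -> kappa ^ k * y j <= @iterT I E A s k y i.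

Lemma Reach_refl I E A kappa s j : @Reach I E A kappa s 0 j j.
Proof. move=> y _ /=; lra. Qed.

Lemma Reach_edge {I E A kappa} (H : @netH I E A kappa) s k j u i :
  Reach E A kappa s k j u -> (E (s + k)%nat u i || (u == i)) -> Reach E A kappa s k.+1 j i.
Proof.
move=> R1 e y hy /=.
have := @Tm_ge _ _ _ _ H _ _ _ _ (iterT_nonneg H s k y hy) e.
have := R1 y hy. have := nk H. move=> *; nra.
Qed.

Lemma Reach_stay {I E A kappa} (H : @netH I E A kappa) s k j i :
  Reach E A kappa s k j i -> Reach E A kappa s k.+1 j i.
Proof.
move=> R1; have e : E (s + k)%nat i i || (i == i) by rewrite eqxx orbT.
exact: (Reach_edge H _ _ _ _ _ R1 e). Qed.

Lemma Reach_mono {I E A kappa} (H : @netH I E A kappa) s k k' j i :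
  (k <= k')%nat -> Reach E A kappa s k j i -> Reach E A kappa s k' j i.
Proof.
move=> /subnK <-; elim: (k' - k)%nat => [|d IH] //= R1.
by rewrite addSn; apply: (Reach_stay H _ _ _ _ (IH R1)).
Qed.

Definition pb (P : Prop) : bool := if excluded_middle_informative P then true else false.
Lemma pbP (P : Prop) : pb P <-> P.
Proof. rewrite /pb; case: excluded_middle_informative => //. Qed.

Lemma cut_lemma {T : Type} (Rel : T -> T -> Prop) (P : T -> Prop) x y :
  clos_refl_trans T Rel x y -> P x -> ~ P y -> exists u v, P u /\ ~ P v /\ Rel u v.
Proof.
move/clos_rt_rt1n_iff; elim => [z|a b c hab hbc IH] hx hy; first by [].
case: (classic (P b)) => hb; first exact: IH.
by exists a, b.
Qed.

Lemma full_reach {I E A kappa} (H : @netH I E A kappa) (B : nat) (HB : (0 < B)%nat)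
  (HBconn : forall k : nat, strongly_connected
      (fun u v : 'I_I => exists t : nat,
          (k * B <= t)%nat /\ (t <= (k + 1) * B - 1)%nat /\ E t u v)) :
  forall s j i, Reach E A kappa s (I * B) j i.
Proof.
move=> s j i.
pose k0 := (s %/ B).+1.
have hk0 : (s < k0 * B <= s + B)%nat.
  have := leq_divM s B. have := ltn_ceil s HB. rewrite /k0 mulSn. lia.
pose off m := ((k0 + m) * B - s)%nat.
pose S m := [set l | pb (Reach E A kappa s (off m) j l)].
have claim : forall m, (minn m.+1 I <= #|S m|)%nat.
  elim => [|m IH].
    have : j \in S 0%nat.
      rewrite inE; apply/pbP; apply: (Reach_mono H _ _ _ _ _ _ (Reach_refl _ E A kappa s j)).
      by [].
    move=> hj; have : (0 < #|S 0%nat|)%nat by apply/card_gt0P; exists j.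
    rewrite /minn; case: ifP => hh //; lia.
  have sub : S m \subset S m.+1.
    apply/subsetP => l; rewrite !inE => /pbP h; apply/pbP.
    apply: (Reach_mono H _ _ _ _ _ _ h); rewrite /off. nia.
  case: (boolP [exists l, l \notin S m]) => [/existsP [l hl]|hall].
    have hj : j \in S m.
      rewrite inE; apply/pbP; apply: (Reach_mono H _ _ _ _ _ _ (Reach_refl _ E A kappa s j)).
      by [].
    have [u [v [hu [hv huv]]]] := cut_lemma _ (fun l => l \in S m) _ _ (HBconn (k0 + m)%nat j l) hj
      (fun h => (negP hl) h).
    case: huv => t [t1 [t2 et]].
    have hvS : v \in S m.+1.
      rewrite inE; apply/pbP.
      move: hu; rewrite inE => /pbP hu.
      have hu' : Reach E A kappa s (t - s) j u.
        apply: (Reach_mono H _ _ _ _ _ _ hu); rewrite /off. nia.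
      have e' : E (s + (t - s))%nat u v || (u == v).
        have -> : (s + (t - s))%nat = t by nia.
        by rewrite et.
      have hv' := Reach_edge H _ _ _ _ _ hu' e'.
      apply: (Reach_mono H _ _ _ _ _ _ hv'); rewrite /off. nia.
    have prop : S m \proper S m.+1.
      apply/properP; split => //; exists v => //.
      by apply/negP.
    have := proper_card prop.
    have : (#|S m| < I)%nat.
      have : (#|S m| <= #|[set~ l]|)%nat.
        apply: subset_leq_card; apply/subsetP => x hx; rewrite !inE.
        by apply/eqP => e; move: hl; rewrite -e hx.
      have : (0 < I)%nat by case: (l) => x hx; lia.
      by rewrite cardsC1 card_ord; lia.
    move: IH; rewrite /minn; case: ifP => h1; case: ifP => h2; move=> *; lia.
  have : S m = setT.
    apply/setP => l; rewrite in_setT; apply/negPn.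
    by move/existsPn: hall => /(_ l).
  move=> e; have : #|S m.+1| = I.
    apply/eqP; rewrite eqn_leq; apply/andP; split.
      by have := max_card (mem (S m.+1)); rewrite card_ord.
    have := subset_leq_card sub. by rewrite e cardsT card_ord.
  move=> ->; rewrite /minn; case: ifP => hh //; lia.
have hfull := claim I.-1.
have hI : (0 < I)%nat by case: (I) i => [[]|].
have hS : S I.-1 = setT.
  apply/eqP; rewrite eqEcard subsetT cardsT card_ord.
  move: hfull; rewrite /minn; case: ifP => _; lia.
have : i \in S I.-1 by rewrite hS inE.
rewrite inE => /pbP h.
apply: (Reach_mono H _ _ _ _ _ _ h); rewrite /off. nia.
Qed.

Lemma argmax_seq {T : eqType} (f : T -> R) (x0 : T) (s : seq T) :
  {i | forall j, j \in s -> f j <= f i}.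
Proof.
elim: s => [|a s [i hi]]; first by exists x0.
case: (Rle_dec (f a) (f i)) => h.
  exists i => j; rewrite inE => /orP [/eqP ->|hj]; [lra | exact: hi].
exists a => j; rewrite inE => /orP [/eqP ->|hj]; [lra | ].
have := hi j hj; lra.
Qed.

Lemma argmax {T : finType} (f : T -> R) (x0 : T) : {i | forall j, f j <= f i}.
Proof.
have [i hi] := argmax_seq f x0 (enum T).
by exists i => j; apply: hi; rewrite mem_enum.
Qed.

Lemma argmin {T : finType} (f : T -> R) (x0 : T) : {i | forall j, f i <= f j}.
Proof.
have [i hi] := argmax (fun t => - f t) x0.
by exists i => j; have := hi j; lra.
Qed.

Lemma Tm_ext {I E A} nu (y z : 'I_I -> R) i :
  (forall l, y l = z l) -> Tm E A nu y i = Tm E A nu z i.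
Proof. move=> h; apply: eq_bigr => j _; by rewrite h. Qed.

Lemma kappa_le1 {I E A kappa} (H : @netH I E A kappa) (i0 : 'I_I) : kappa <= 1.
Proof.
have := ncol H 0%nat i0. rewrite (bigD1 i0) //=; fixR.
have : 0 <= \big[Rplus/R0]_(i | i != i0) A 0%nat i i0.
  apply: sum_ge0 => j _; exact: A_nonneg H _ _ _.
have := ndiag H 0%nat i0.
set S := \big[Rplus/R0]_(i | i != i0) A 0%nat i i0. move=> *; lra.
Qed.

Lemma sum_const_ord I (c : R) : \big[Rplus/0]_(i : 'I_I) c = INR I * c.
Proof.
rewrite big_const card_ord; elim: I => [|k IH]; first by simpl; ring.
by rewrite S_INR /= IH; ring.
Qed.

Lemma phi_facts {I E A kappa} (H : @netH I E A kappa) (B : nat) (HB : (0 < B)%nat)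
  (HBconn : forall k : nat, strongly_connected
      (fun u v : 'I_I => exists t : nat,
          (k * B <= t)%nat /\ (t <= (k + 1) * B - 1)%nat /\ E t u v))
  (phi : nat -> 'I_I -> R) (i0 : 'I_I)
  (Hphi0 : forall i, phi 0%nat i = 1)
  (Hphi : forall nu i, phi nu.+1 i = Tm E A nu (phi nu) i) :
  (forall nu i, kappa ^ (I * B) <= phi nu i <= INR I)
  /\ (forall nu, \big[Rplus/0]_i phi nu i = INR I)
  /\ (forall s k i, phi (s + k)%nat i = iterT E A s k (phi s) i).
Proof.
have k0 := nk H. have k1 := kappa_le1 H i0.
have pos : forall nu i, 0 <= phi nu i.
  elim => [|nu IH] i; first by rewrite Hphi0; lra.
  by rewrite Hphi; apply: Tm_nonneg H _ _ _ IH.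
have sum : forall nu, \big[Rplus/0]_i phi nu i = INR I.
  elim => [|nu IH].
    under eq_bigr => i _ do rewrite Hphi0. by rewrite sum_const_ord; ring.
  under eq_bigr => i _ do rewrite Hphi. by rewrite (Tm_sum H).
have it : forall s k i, phi (s + k)%nat i = iterT E A s k (phi s) i.
  move=> s; elim => [|k IH] i; first by rewrite addn0.
  by rewrite addnS Hphi /=; apply: Tm_ext.
split; last by split.
move=> nu i; split; last first.
  rewrite -(sum nu) (bigD1 i) //=; fixR.
  have : 0 <= \big[Rplus/0]_(j | j != i) phi nu j by apply: sum_ge0.
  set S := \big[Rplus/0]_(j | j != i) phi nu j. lra.
have kpos : forall n, 0 <= kappa ^ n by move=> n; apply: pow_le; lra.
case: (leqP (I * B) nu) => hnu.
  have [j hj] := argmax (phi (nu - I * B)%nat) i0.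
  have hj1 : 1 <= phi (nu - I * B)%nat j.
    have : INR I <= INR I * phi (nu - I * B)%nat j.
      have h := @sum_le _ (index_enum 'I_I) predT (phi (nu - I * B)%nat)
        (fun _ => phi (nu - I * B)%nat j) (fun l _ => hj l).
      by rewrite sum_const_ord sum in h.
    have hI : 0 < INR I by apply: lt_0_INR; case: (i0) => x hx; lia.
    nra.
  have R1 := full_reach H B HB HBconn (nu - I * B)%nat j i.
  have := R1 _ (pos (nu - I * B)%nat).
  rewrite -it subnK //. have := kpos (I * B)%nat. nra.
have R1 : Reach E A kappa 0 nu i i.
  apply: (Reach_mono H _ _ _ _ _ _ (Reach_refl _ E A kappa 0 i)); by [].
have := R1 _ (pos 0%nat). rewrite -it add0n Hphi0.
have : kappa ^ (I * B) <= kappa ^ nu.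
  have -> : kappa ^ (I * B) = kappa ^ nu * kappa ^ (I * B - nu).
    rewrite -pow_add; congr pow; lia.
  have : kappa ^ (I * B - nu) <= 1.
    rewrite -(pow1 (I * B - nu)); apply: pow_incr; lra.
  have := kpos nu. nra.
move=> *; lra.
Qed.

Lemma cv_of_bounded (a : nat -> R) (Cst : R) :
  (forall t, 0 <= a t) -> (forall N, \big[Rplus/0]_(0 <= t < N) a t <= Cst) ->
  exists l, Un_cv (fun N => sum_f_R0 a N) l.
Proof.
move=> h0 hb.
have [l hl] : {l | Un_cv (sum_f_R0 a) l}.
  apply: growing_cv.
    move=> n /=; have := h0 n.+1; lra.
  exists Cst => x [i ->]; rewrite sum_f_big; exact: hb.
by exists l.
Qed.

Lemma bounded_of_cv (a : nat -> R) l :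
  (forall t, 0 <= a t) -> Un_cv (fun N => sum_f_R0 a N) l ->
  forall N, \big[Rplus/0]_(0 <= t < N) a t <= l.
Proof.
move=> h0 hl [|N]; last by rewrite -sum_f_big; exact: (sum_incr a N l hl h0).
rewrite big_nil; have := sum_incr a 0 l hl h0; have := h0 0%nat; simpl; lra.
Qed.

Lemma aux_div (delta ph N a P z : R) :
  0 < delta -> delta <= ph -> ph <= N -> 0 <= a -> 0 <= P -> a - P <= z ->
  a / N - P / delta <= z / ph.
Proof.
move=> hd h1 h2 ha hP hz.
have hph : 0 < ph by lra.
have hN : 0 < N by lra.
have e1 : a / N <= a / ph.
  apply: Rmult_le_compat_l => //; apply: Rinv_le_contravar; lra.
have e2 : P / ph <= P / delta.
  apply: Rmult_le_compat_l => //; apply: Rinv_le_contravar; lra.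
have e3 : (a - P) / ph <= z / ph.
  apply: Rmult_le_compat_r => //; apply: Rlt_le; apply: Rinv_0_lt_compat; lra.
have e4 : (a - P) / ph = a / ph - P / ph by field; lra.
lra.
Qed.

Lemma single_le_sum {T : finType} (f : T -> R) (i : T) :
  (forall j, 0 <= f j) -> f i <= \big[Rplus/0]_j f j.
Proof.
move=> h; rewrite (bigD1 i) //=; fixR.
have : 0 <= \big[Rplus/0]_(j | j != i) f j by apply: sum_ge0.
set S := \big[Rplus/0]_(j | j != i) f j. lra.
Qed.

Lemma lower_step {I E A kappa} (H : @netH I E A kappa) (B : nat) (HB : (0 < B)%nat)
  (HBconn : forall k : nat, strongly_connected
      (fun u v : 'I_I => exists t : nat,
          (k * B <= t)%nat /\ (t <= (k + 1) * B - 1)%nat /\ E t u v))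
  (phi : nat -> 'I_I -> R)
  (Hphi : forall nu i, phi nu.+1 i = Tm E A nu (phi nu) i)
  (delta : R) (hdelta : 0 < delta) (Hlow : forall nu i, delta <= phi nu i)
  (Hup : forall nu i, phi nu i <= INR I)
  (d u : nat -> 'I_I -> R) (gam : nat -> R) (Kc : R)
  (Hd : forall nu i, phi nu.+1 i * d nu.+1 i = Tm E A nu (fun j => phi nu j * u nu j) i)
  (Hud : forall nu j, Rabs (u nu j - d nu j) <= Kc * gam nu) :
  forall s c jx, (forall j, c <= d s j) -> forall i,
   kappa ^ (I * B) * delta / INR I * (d s jx - c)
   - INR I * INR I * Kc / delta * \big[Rplus/0]_(0 <= r < I * B) gam (s + r)%nat
   <= d (s + I * B)%nat i - c.
Proof.
move=> s c jx hc i.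
set L := (I * B)%nat.
pose z k j := phi (s + k)%nat j * (d (s + k)%nat j - c).
pose e k j := phi (s + k)%nat j * (u (s + k)%nat j - d (s + k)%nat j).
have phipos : forall nu j, 0 <= phi nu j by move=> nu j; have := Hlow nu j; lra.
have zrec : forall k i, z k.+1 i = Tm E A (s + k)%nat (fun j => z k j + e k j) i.
  move=> k l; rewrite /z addnS.
  have -> : phi (s + k).+1 l * (d (s + k).+1 l - c) =
     phi (s + k).+1 l * d (s + k).+1 l - c * phi (s + k).+1 l by ring.
  rewrite Hd Hphi.
  have := Tm_lin H (s + k)%nat (fun j => phi (s + k)%nat j * u (s + k)%nat j) (phi (s + k)%nat) 1 (- c) l.
  have -> : Tm E A (s + k)%nat (fun l0 => 1 * (phi (s + k)%nat l0 * u (s + k)%nat l0) + - c * phi (s + k)%nat l0) l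
     = Tm E A (s + k)%nat (fun j => z k j + e k j) l.
    apply: Tm_ext => j; rewrite /z /e; ring.
  move=> ->; ring.
pose zeta k := iterT E A s k (z 0%nat).
have Kc0 : forall nu, 0 <= Kc * gam nu.
  move=> nu; have := Hud nu i; have := Rabs_pos (u nu i - d nu i); lra.
have ebound : forall k, \big[Rplus/0]_j Rabs (e k j) <= INR I * INR I * Kc * gam (s + k)%nat.
  move=> k.
  apply: Rle_trans (_ : \big[Rplus/0]_(j : 'I_I) (INR I * (Kc * gam (s + k)%nat)) <= _).
    apply: sum_le => j _; rewrite /e Rabs_mult (Rabs_pos_eq _ (phipos _ _)).
    apply: Rmult_le_compat; [exact: phipos|exact: Rabs_pos|exact: Hup|exact: Hud].
  rewrite sum_const_ord; lra.
have diff : forall k, \big[Rplus/0]_l Rabs (z k l - zeta k l) <=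
    \big[Rplus/0]_(0 <= r < k) (INR I * INR I * Kc * gam (s + r)%nat).
  elim => [|k IH].
    rewrite big_nil.
    have -> : \big[Rplus/0]_l Rabs (z 0%nat l - zeta 0%nat l) = \big[Rplus/0]_(l : 'I_I) 0.
      by apply: eq_bigr => l _; rewrite /zeta /= Rminus_diag Rabs_R0.
    by rewrite sum_const_ord; lra.
  rewrite big_nat_recr //=; fixR.
  have -> : \big[Rplus/0]_l Rabs (z k.+1 l - zeta k.+1 l) =
      \big[Rplus/0]_l Rabs (Tm E A (s + k)%nat (fun j => (z k j - zeta k j) + e k j) l).
    apply: eq_bigr => l _; congr Rabs.
    rewrite zrec /zeta /=.
    have := Tm_lin H (s + k)%nat (fun j => z k j + e k j) (iterT E A s k (z 0%nat)) 1 (-1) l.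
    have -> : Tm E A (s + k)%nat (fun l0 => 1 * (z k l0 + e k l0) + -1 * iterT E A s k (z 0%nat) l0) l
      = Tm E A (s + k)%nat (fun j => (z k j - zeta k j) + e k j) l.
      by apply: Tm_ext => j; rewrite /zeta; ring.
    move=> ->; ring.
  apply: Rle_trans (Tm_abs H _ _) _.
  apply: Rle_trans (_ : \big[Rplus/0]_l (Rabs (z k l - zeta k l) + Rabs (e k l)) <= _).
    by apply: sum_le => l _; apply: Rabs_triang.
  rewrite big_split; fixR.
  move: (ebound k) IH.
  set a1 := \big[Rplus/0]_(j : 'I_I) Rabs (e k j).
  set a2 := \big[Rplus/0]_(j : 'I_I) Rabs (z k j - zeta k j).
  set a3 := \big[Rplus/0]_(0 <= r < k) (INR I * INR I * Kc * gam (s + r)%nat).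
  lra.
have z0 : forall l, 0 <= z 0%nat l.
  move=> l; rewrite /z; apply: Rmult_le_pos; [exact: phipos| have := hc l; rewrite addn0; lra].
have hreach := full_reach H B HB HBconn s jx i (z 0%nat) z0.
have Pdef : \big[Rplus/0]_(0 <= r < L) (INR I * INR I * Kc * gam (s + r)%nat) =
  INR I * INR I * Kc * \big[Rplus/0]_(0 <= r < L) gam (s + r)%nat.
  by rewrite sum_scal.
set Sg := \big[Rplus/0]_(0 <= r < L) gam (s + r)%nat in Pdef *.
have hP0 : 0 <= INR I * INR I * Kc * Sg.
  rewrite -Pdef; apply: sum_ge0 => r _. have := Kc0 (s + r)%nat.
  have := pos_INR I. move=> *; nra.
have hzl : kappa ^ L * delta * (d s jx - c) - INR I * INR I * Kc * Sg <= z L i.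
  have h1 : Rabs (z L i - zeta L i) <= INR I * INR I * Kc * Sg.
    rewrite -Pdef; apply: Rle_trans (diff L).
    exact: (single_le_sum (fun l => Rabs (z L l - zeta L l)) i (fun j => Rabs_pos _)).
  have h2 : kappa ^ L * delta * (d s jx - c) <= zeta L i.
    apply: Rle_trans hreach; rewrite /z addn0.
    have : 0 <= kappa ^ L by apply: pow_le; have := nk H; lra.
    have := hc jx; have := Hlow s jx. move=> h3 h4 h5. rewrite -/L Rmult_assoc.
    apply: Rmult_le_compat_l => //. apply: Rmult_le_compat_r; lra.
  have := Rle_abs (zeta L i - z L i). rewrite Rabs_minus_sym. lra.
have hph := Hlow (s + L)%nat i.
have hI : 0 < INR I by have := Hup 0%nat i; have := Hlow 0%nat i; lra.
have ha : 0 <= kappa ^ L * delta * (d s jx - c).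
  have : 0 <= kappa ^ L by apply: pow_le; have := nk H; lra.
  have := hc jx. move=> h3 h4. apply: Rmult_le_pos; [apply: Rmult_le_pos|]; lra.
have := aux_div _ _ _ _ _ _ hdelta hph (Hup _ _) ha hP0 hzl.
have -> : z L i / phi (s + L)%nat i = d (s + L)%nat i - c.
  rewrite /z; field; lra.
have -> : kappa ^ L * delta * (d s jx - c) / INR I = kappa ^ L * delta / INR I * (d s jx - c).
  by field; lra.
have -> : INR I * INR I * Kc * Sg / delta = INR I * INR I * Kc / delta * Sg by field; lra.
done.
Qed.

Lemma spread_step {I E A kappa} (H : @netH I E A kappa) (B : nat) (HB : (0 < B)%nat)
  (HBconn : forall k : nat, strongly_connected
      (fun u v : 'I_I => exists t : nat,
          (k * B <= t)%nat /\ (t <= (k + 1) * B - 1)%nat /\ E t u v))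
  (phi : nat -> 'I_I -> R)
  (Hphi : forall nu i, phi nu.+1 i = Tm E A nu (phi nu) i)
  (delta : R) (hdelta : 0 < delta) (Hlow : forall nu i, delta <= phi nu i)
  (Hup : forall nu i, phi nu i <= INR I)
  (d u : nat -> 'I_I -> R) (gam : nat -> R) (Kc : R)
  (Hd : forall nu i, phi nu.+1 i * d nu.+1 i = Tm E A nu (fun j => phi nu j * u nu j) i)
  (Hud : forall nu j, Rabs (u nu j - d nu j) <= Kc * gam nu) :
  forall s ia ib, (forall j, d s ib <= d s j <= d s ia) -> forall i i',
   d (s + I * B)%nat i - d (s + I * B)%nat i' <=
   (1 - kappa ^ (I * B) * delta / INR I) * (d s ia - d s ib)
   + 2 * (INR I * INR I * Kc / delta) * \big[Rplus/0]_(0 <= r < I * B) gam (s + r)%nat.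
Proof.
move=> s ia ib hb i i'.
have h1 := lower_step H B HB HBconn phi Hphi delta hdelta Hlow Hup d u gam Kc Hd Hud
   s (d s ib) ia (fun j => proj1 (hb j)) i'.
have Hd' : forall nu i, phi nu.+1 i * (- d nu.+1 i) =
    Tm E A nu (fun j => phi nu j * (- u nu j)) i.
  move=> nu l.
  have := Tm_lin H nu (fun j => phi nu j * u nu j) (fun j => 0) (-1) 0 l.
  have -> : Tm E A nu (fun l0 => -1 * (phi nu l0 * u nu l0) + 0 * 0) l =
            Tm E A nu (fun j => phi nu j * (- u nu j)) l by apply: Tm_ext => j; ring.
  move=> ->; rewrite -Hd; ring.
have Hud' : forall nu j, Rabs ((fun nu j => - u nu j) nu j - (fun nu j => - d nu j) nu j) <= Kc * gam nu.
  move=> nu j /=. rewrite -Rabs_Ropp. have -> : - (- u nu j - - d nu j) = u nu j - d nu j by ring.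
  exact: Hud.
have h2 := lower_step H B HB HBconn phi Hphi delta hdelta Hlow Hup
   (fun nu j => - d nu j) (fun nu j => - u nu j) gam Kc Hd' Hud'
   s (- d s ia) ib (fun j => Ropp_le_contravar _ _ (proj2 (hb j))) i.
simpl in h2.
have hI : 0 < INR I by have := Hup 0%nat i; have := Hlow 0%nat i; lra.
have heta : 0 <= kappa ^ (I * B) * delta / INR I.
  apply: Rmult_le_pos; [apply: Rmult_le_pos; [apply: pow_le; have := nk H; lra|lra]|].
  by apply: Rlt_le; apply: Rinv_0_lt_compat.
have hsp : 0 <= d s ia - d s ib by have := hb ia; lra.
move: h1 h2.
set eta := kappa ^ (I * B) * delta / INR I.
set Sg := \big[Rplus/0]_(0 <= r < I * B) gam (s + r)%nat.
move=> h1 h2.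
have : 0 <= eta * (d s ia - d s ib) by apply: Rmult_le_pos.
have e : eta * (- d s ib - - d s ia) = eta * (d s ia - d s ib) by ring.
rewrite e in h2.
lra.
Qed.

Lemma coord_le_nrm {T : finType} (x : T -> R) p : Rabs (x p) <= nrm x.
Proof.
rewrite /nrm /ip.
have h := single_le_sum (fun t => x t * x t) p (fun t => ltac:(nra)).
rewrite -(sqrt_square (Rabs (x p))); last exact: Rabs_pos.
apply: sqrt_le_1_alt.
have -> : Rabs (x p) * Rabs (x p) = x p * x p by rewrite -Rabs_mult Rabs_pos_eq; nra.
exact: h.
Qed.

Lemma fold_bound (l : list nat) k :
  List.In k l -> INR k + 1 <= List.fold_right (fun k a => INR k + 1 + a) 0 l.
Proof.
have pos : forall l : list nat, 0 <= List.fold_right (fun k a => INR k + 1 + a) 0 l.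
  elim => [|a l' IH] /=; [lra|have := pos_INR a; lra].
elim: l => [|a l IH] //= [->|h]; first by have := pos l; lra.
have := IH h; have := pos_INR a; lra.
Qed.

Lemma compact_bounded {T : finType} (S : (T -> R) -> Prop) (x0 : T) :
  vcompact_set S -> exists C, 0 <= C /\ forall Z p, S Z -> Rabs (Z p) <= C.
Proof.
move=> hc.
pose Uc (k : nat) := fun x : T -> R => forall p, Rabs (x p) < INR k + 1.
have op : forall k, vopen_set (Uc k).
  move=> k x hx.
  have [q hq] := argmax (fun p => Rabs (x p)) x0.
  exists (INR k + 1 - Rabs (x q)); split; first by have := hx q; lra.
  move=> y hy p.
  have h1 : Rabs (y p - x p) <= nrm (vsub y x) := coord_le_nrm (vsub y x) p.
  have h2 := Rabs_triang_inv (y p) (x p).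
  have := hq p. lra.
have cov : forall x, S x -> exists k, Uc k x.
  move=> x _.
  have [q hq] := argmax (fun p => Rabs (x p)) x0.
  have [n hn] := INR_archimed 1 (Rabs (x q)) Rlt_0_1.
  exists n => p; have := hq p; lra.
have [l hl] := hc nat Uc op cov.
exists (List.fold_right (fun k a => INR k + 1 + a) 0 l); split.
  case: l hl => [|a l'] hl /=; first lra.
  have := List.fold_right (fun k a => INR k + 1 + a) 0 l'.
  move=> _. have := fold_bound (a :: l') a (or_introl erefl). have := pos_INR a. simpl. lra.
move=> Z p hZ.
have [k [hk hu]] := hl Z hZ.
have := fold_bound l k hk. have := hu p. lra.
Qed.

Lemma sum_const_fin {T : finType} (c : R) : \big[Rplus/0]_(t : T) c = INR #|T| * c.
Proof.
rewrite big_const; elim: #|T| => [|k IH]; first by simpl; ring.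
by rewrite S_INR /= IH; ring.
Qed.

Lemma avg_bounds {I : nat} (w x : 'I_I -> R) lo hi :
  (forall j, 0 <= w j) -> \big[Rplus/0]_j w j = INR I -> 0 < INR I ->
  (forall j, lo <= x j <= hi) ->
  lo <= / INR I * \big[Rplus/0]_j (w j * x j) <= hi.
Proof.
move=> w0 ws hI hx.
have hl : INR I * lo <= \big[Rplus/0]_j (w j * x j).
  rewrite -ws Rmult_comm -sum_scal; apply: sum_le => j _.
  have := hx j; have := w0 j; nra.
have hh : \big[Rplus/0]_j (w j * x j) <= INR I * hi.
  rewrite -ws Rmult_comm -sum_scal; apply: sum_le => j _.
  have := hx j; have := w0 j; nra.
have hi' : 0 < / INR I by apply: Rinv_0_lt_compat.
split.
  have -> : lo = / INR I * (INR I * lo) by field; lra.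
  by apply: Rmult_le_compat_l; lra.
have -> : hi = / INR I * (INR I * hi) by field; lra.
by apply: Rmult_le_compat_l; lra.
Qed.

Lemma sq_terms_to0 (f : nat -> R) :
  (forall t, 0 <= f t) ->
  (exists l, Un_cv (fun N => sum_f_R0 (fun t => f t.+1 ^ 2) N) l) -> Un_cv f 0.
Proof.
move=> f0 [l hl].
have h1 : Un_cv (fun n => sum_f_R0 (fun t => f t.+1 ^ 2) (n + 1)%nat) l := CV_shift' _ 1 l hl.
have h2 := CV_minus _ _ _ _ h1 hl.
have h3 : Un_cv (fun n => f (n + 2)%nat ^ 2) 0.
  move=> eps he; have [N hN] := h2 eps he.
  exists N => n hn; have := hN n hn.
  rewrite Rminus_diag /Rdist.
  have -> : sum_f_R0 (fun t => f t.+1 ^ 2) (n + 1)%nat - sum_f_R0 (fun t => f t.+1 ^ 2) n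
    = f (n + 2)%nat ^ 2.
    rewrite addn1 /=. have -> : (n + 2)%nat = n.+2 by rewrite addn2. ring.
  done.
apply: (CV_shift _ 2).
move=> eps he.
have [N hN] := h3 (eps ^ 2) ltac:(nra).
exists N => n hn; have := hN n hn. rewrite /Rdist !Rminus_0_r. change (n + 2)%coq_nat with (n + 2)%nat.
move=> h. have hf := f0 (n + 2)%nat. rewrite (Rabs_pos_eq (f _) hf). rewrite Rabs_pos_eq in h; last by apply: pow2_ge_0. nra.


Qed.

Lemma abs_between (x c : R) : Rabs x <= c -> - c <= x <= c.
Proof. move=> h; split; [have := Rle_abs (- x); rewrite Rabs_Ropp|have := Rle_abs x]; lra. Qed.

Lemma err_bound {I M K : nat} (Ds : 'I_I -> Mat M K) (w : 'I_I -> R) (b : R) :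
  (forall j, 0 <= w j) -> \big[Rplus/0]_j w j = INR I -> 0 < INR I -> 0 <= b ->
  (forall pp, exists lo hi, hi - lo <= b /\ forall j, lo <= Ds j pp <= hi) ->
  nrm (vsub (stack Ds) (kron1 (wavg w Ds))) ^ 2
    <= INR #|{: ('I_I * 'I_M) * 'I_K}| * b ^ 2.
Proof.
move=> w0 ws hI hb hpp.
rewrite /nrm pow2_sqrt; last by apply: sum_ge0 => q _; nra.
rewrite /ip -sum_const_fin; apply: sum_le => q _.
have [lo [hi [hlh hj]]] := hpp (q.1.2, q.2).
have ha := avg_bounds w (fun j => Ds j (q.1.2, q.2)) lo hi w0 ws hI hj.
have e : vsub (stack Ds) (kron1 (wavg w Ds)) q =
   Ds q.1.1 (q.1.2, q.2) - / INR I * \big[Rplus/0]_j (w j * Ds j (q.1.2, q.2)) by [].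
rewrite e. have := hj q.1.1. move: ha.
set a := / INR I * \big[Rplus/0]_j (w j * Ds j (q.1.2, q.2)).
move=> ha hq.
have : Rabs (Ds q.1.1 (q.1.2, q.2) - a) <= b.
  apply: Rabs_le; lra.
move=> h. have := abs_between _ _ h. move=> [h1 h2]; nra.
Qed.

Theorem mainTheorem3
  (* dimensions *)
  (I M K : nat) (n : 'I_I -> nat)
  (HI : (0 < I)%nat) (HM : (0 < M)%nat) (HK : (0 < K)%nat) (Hn : forall i, (0 < n i)%nat)
  (* problem data *)
  (f : forall i : 'I_I, Mat M K -> Mat K (n i) -> R)
  (gradD : forall i : 'I_I, Mat M K -> Mat K (n i) -> Mat M K)
  (gradX : forall i : 'I_I, Mat M K -> Mat K (n i) -> Mat K (n i))
  (g : forall i : 'I_I, Mat K (n i) -> R) (G : Mat M K -> R)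
  (Oset : Mat M K -> Prop) (Oi : forall i : 'I_I, Mat K (n i) -> Prop)
  (Dset : Mat M K -> Prop) (Xset : forall i : 'I_I, Mat K (n i) -> Prop)
  (LX : 'I_I -> Mat M K -> R)
  (* (A1) *)
  (HOopen : vopen_set Oset) (HOconv : vconvex_set Oset)
  (HOiopen : forall i, vopen_set (Oi i)) (HOiconv : forall i, vconvex_set (Oi i))
  (HfC2 : forall i, C2_on (fun z => Oset (lpart z) /\ Oi i (rpart z)) (joint (f i)))
  (HgradD : forall i D X, Oset D -> Oi i X -> forall p,
      has_partial (fun D' => f i D' X) D p (gradD i D X p))
  (HgradX : forall i D X, Oset D -> Oi i X -> forall q,
      has_partial (fun X' => f i D X') X q (gradX i D X q))
  (Hfbdd : forall i, exists c, forall D X, Oset D -> Oi i X -> c <= f i D X)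
  (HfconvD : forall i X, Oi i X -> convex_on Oset (fun D => f i D X))
  (HfconvX : forall i D, Oset D -> convex_on (Oi i) (f i D))
  (* (A2) *)
  (HLip : forall i D, Dset D -> forall X Y, Xset i X -> Xset i Y ->
      nrm (vsub (gradX i D X) (gradX i D Y)) <= LX i D * nrm (vsub X Y))
  (HLcont : forall i, cont_on Dset (LX i))
  (* (A3) *)
  (HDsub : forall D, Dset D -> Oset D) (HXsub : forall i X, Xset i X -> Oi i X)
  (HDne : exists D, Dset D) (HDcomp : vcompact_set Dset) (HDconv : vconvex_set Dset)
  (HXne : forall i, exists X, Xset i X) (HXclosed : forall i, vclosed_set (Xset i))
  (HXconv : forall i, vconvex_set (Xset i))
  (* (A4) *)
  (HGconv : convex_on Oset G)
  (* (A5) *)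
  (HA5 : forall i, (vcompact_set (Xset i) /\ convex_on (Oi i) (g i)) \/
                   (exists mu, 0 < mu /\ strongly_convex_on (Oi i) mu (g i)))
  (* network: (j, i) in E nu  iff  E nu j i  (link from j to i) *)
  (E : nat -> 'I_I -> 'I_I -> bool) (B : nat)
  (HB : (0 < B)%nat)
  (HBconn : forall k : nat, strongly_connected
      (fun u v : 'I_I => exists t : nat,
          (k * B <= t)%nat /\ (t <= (k + 1) * B - 1)%nat /\ E t u v))
  (* weights *)
  (A : nat -> 'I_I -> 'I_I -> R) (kappa : R) (Hkappa : 0 < kappa)
  (HAdiag : forall nu i, kappa <= A nu i i)
  (HAedge : forall nu i j, j <> i -> E nu j i -> kappa <= A nu i j)
  (HAnon : forall nu i j, j <> i -> ~ E nu j i -> A nu i j = 0)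
  (HAcol : forall nu j, \big[Rplus/R0]_(i : 'I_I) A nu i j = 1)
  (* surrogates (S), parameters (T1) and step sizes *)
  (selD selX : 'I_I -> bool)
  (tauD tauX : nat -> 'I_I -> R) (eps : R) (gamma : nat -> R)
  (HtauDpos : forall nu i, 0 < tauD nu i) (HtauXpos : forall nu i, 0 < tauX nu i)
  (HtauDbnd : forall i, exists a b, 0 < a /\ forall nu, a <= tauD nu i <= b)
  (HtauXbnd : forall i, exists b, forall nu, tauX nu i <= b)
  (Heps : 0 < eps)
  (* iterates *)
  (phi : nat -> 'I_I -> R)
  (D Dt U Th : nat -> 'I_I -> Mat M K)
  (X : nat -> forall i : 'I_I, Mat K (n i))
  (HtauXL : forall nu i, (1 <= nu)%nat -> LX i (U nu i) / 2 + eps <= tauX nu i)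
  (Hgamma : forall nu, 0 < gamma nu <= 1)
  (Hgdiv : cv_infty (fun N => sum_f_R0 gamma N))
  (Hgsq : exists l, Un_cv (fun N => sum_f_R0 (fun k => gamma k ^ 2) N) l)
  (* initialization *)
  (Hphi0 : forall i, phi 0%nat i = 1)
  (HD0 : forall i, Dset (D 0%nat i)) (HX0 : forall i, Xset i (X 0%nat i))
  (HTh0 : forall i, Th 0%nat i = gradD i (D 0%nat i) (X 0%nat i))
  (* D4L iteration *)
  (HDt : forall nu i, is_argmin Dset
      (fun Z => (if selD i
                 then f i Z (X nu i) + tauD nu i / 2 * nrm (vsub Z (D nu i)) ^ 2
                 else ip (gradD i (D nu i) (X nu i)) (vsub Z (D nu i))
                      + tauD nu i / 2 * nrm (vsub Z (D nu i)) ^ 2)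
                + ip (vsub (vscal (INR I) (Th nu i)) (gradD i (D nu i) (X nu i)))
                     (vsub Z (D nu i))
                + G Z)
      (Dt nu i))
  (HU : forall nu i, U nu i = vadd (D nu i) (vscal (gamma nu) (vsub (Dt nu i) (D nu i))))
  (HX : forall nu i, is_argmin (Xset i)
      (fun Y => (if selX i
                 then f i (U nu i) Y + tauX nu i / 2 * nrm (vsub Y (X nu i)) ^ 2
                 else ip (gradX i (U nu i) (X nu i)) (vsub Y (X nu i))
                      + tauX nu i / 2 * nrm (vsub Y (X nu i)) ^ 2)
                + g i Y)
      (X nu.+1 i))
  (Hphi : forall nu i, phi nu.+1 i =
      \big[Rplus/R0]_(j | E nu j i || (j == i)) (A nu i j * phi nu j))
  (HD : forall nu i, D nu.+1 i =
      vscal (/ phi nu.+1 i)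
        (vsum (fun j => E nu j i || (j == i)) (fun j => vscal (A nu i j * phi nu j) (U nu j))))
  (HTh : forall nu i, Th nu.+1 i =
      vadd (vscal (/ phi nu.+1 i)
              (vsum (fun j => E nu j i || (j == i))
                    (fun j => vscal (A nu i j * phi nu j) (Th nu j))))
           (vscal (/ phi nu.+1 i)
              (vsub (gradD i (D nu.+1 i) (X nu.+1 i)) (gradD i (D nu i) (X nu i)))))
  : Un_cv (fun nu => nrm (vsub (stack (D nu)) (kron1 (wavg (phi nu) (D nu))))) 0
    /\ (exists l, Un_cv (fun N => sum_f_R0 (fun t =>
           nrm (vsub (stack (D t.+1)) (kron1 (wavg (phi t.+1) (D t.+1)))) ^ 2) N) l)
    /\ (exists l, Un_cv (fun N => sum_f_R0 (fun t =>
           nrm (vsub (stack (U t.+1)) (kron1 (wavg (phi t.+1) (U t.+1)))) ^ 2) N) l).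
Proof.
clear HOopen HOconv HOiopen HOiconv HfC2 HgradD HgradX Hfbdd HfconvD HfconvX HLip HLcont
  HDsub HXsub HDne HDconv HXne HXclosed HXconv HGconv HA5 HtauDpos HtauXpos HtauDbnd
  HtauXbnd HtauXL HX0 HTh0 HX HTh Hgdiv.
pose i0 : 'I_I := Ordinal HI.
pose p0 : ('I_M * 'I_K)%type := (Ordinal HM, Ordinal HK).
have H : netH I E A kappa := @NetH I E A kappa Hkappa HAdiag HAedge HAnon HAcol.
have Hphi' : forall nu i, phi nu.+1 i = Tm E A nu (phi nu) i := Hphi.
have [Hpb [Hps Hpit]] := phi_facts H B HB HBconn phi i0 Hphi0 Hphi'.
pose delta := kappa ^ (I * B).
have hdelta : 0 < delta by apply: pow_lt.
have Hlow : forall nu i, delta <= phi nu i := fun nu i => proj1 (Hpb nu i).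
have Hup : forall nu i, phi nu i <= INR I := fun nu i => proj2 (Hpb nu i).
have hI : 0 < INR I by apply: lt_0_INR; apply/ltP.
have phipos : forall nu i, 0 <= phi nu i by move=> nu i; have := Hlow nu i; lra.
have [C [C0 HC]] := compact_bounded Dset p0 HDcomp.
have HDtb : forall nu i p, Rabs (Dt nu i p) <= C := fun nu i p => HC _ p (proj1 (HDt nu i)).
have HUeq : forall nu i p, U nu i p = D nu i p + gamma nu * (Dt nu i p - D nu i p).
  by move=> nu i p; rewrite HU.
have Hdeq : forall nu i p, phi nu.+1 i * D nu.+1 i p = Tm E A nu (fun j => phi nu j * U nu j p) i.
  move=> nu i p; rewrite HD /vscal /vsum /Tm.
  rewrite -Rmult_assoc Rinv_r ?Rmult_1_l; last by have := Hlow nu.+1 i; lra.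
  by apply: eq_bigr => j _; ring.
have HDb : forall nu i p, Rabs (D nu i p) <= C.
  elim => [|nu IH] i p; first exact: HC _ p (HD0 i).
  have hU : forall j, - C <= U nu j p <= C.
    move=> j; rewrite HUeq. have := abs_between _ _ (IH j p).
    have := abs_between _ _ (HDtb nu j p). have := Hgamma nu. move=> *; nra.
  have hT1 := Tm_mono H nu (fun j => phi nu j * U nu j p) (fun j => C * phi nu j + 0 * phi nu j) i
     (fun j => ltac:(have := hU j; have := phipos nu j; nra)).
  have hT2 := Tm_mono H nu (fun j => (- C) * phi nu j + 0 * phi nu j) (fun j => phi nu j * U nu j p) i
     (fun j => ltac:(have := hU j; have := phipos nu j; nra)).
  rewrite !(Tm_lin H) -Hphi' -Hdeq in hT1 hT2.
  have hp := Hlow nu.+1 i.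
  apply: Rabs_le; split.
    apply: (Rmult_le_reg_l (phi nu.+1 i)); lra.
  apply: (Rmult_le_reg_l (phi nu.+1 i)); lra.
pose Kc := 2 * C.
have Hud : forall p nu j, Rabs (U nu j p - D nu j p) <= Kc * gamma nu.
  move=> p nu j; rewrite HUeq.
  have -> : D nu j p + gamma nu * (Dt nu j p - D nu j p) - D nu j p =
    gamma nu * (Dt nu j p - D nu j p) by ring.
  rewrite Rabs_mult (Rabs_pos_eq (gamma nu)); last by have := Hgamma nu; lra.
  have h1 := Rabs_triang (Dt nu j p) (- D nu j p). rewrite Rabs_Ropp in h1.
  have h : Rabs (Dt nu j p - D nu j p) <= 2 * C.
    have := HDtb nu j p; have := HDb nu j p. rewrite /Rminus. lra.
  have := Hgamma nu. rewrite /Kc. move=> hg.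
  have := Rabs_pos (Dt nu j p - D nu j p). nra.
pose ia nu p := sval (argmax (fun i => D nu i p) i0).
pose ib nu p := sval (argmin (fun i => D nu i p) i0).
have hia : forall nu p j, D nu j p <= D nu (ia nu p) p :=
  fun nu p => svalP (argmax (fun i => D nu i p) i0).
have hib : forall nu p j, D nu (ib nu p) p <= D nu j p :=
  fun nu p => svalP (argmin (fun i => D nu i p) i0).
pose sp nu p := D nu (ia nu p) p - D nu (ib nu p) p.
pose S nu := \big[Rplus/0]_(p : 'I_M * 'I_K) sp nu p.
have sp0 : forall nu p, 0 <= sp nu p.
  by move=> nu p; have := hia nu p (ib nu p); rewrite /sp; lra.
have spC : forall nu p, sp nu p <= 2 * C.
  move=> nu p; have := abs_between _ _ (HDb nu (ia nu p) p).
  have := abs_between _ _ (HDb nu (ib nu p) p); rewrite /sp; lra.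
have spS : forall nu p, sp nu p <= S nu := fun nu p => single_le_sum (sp nu) p (sp0 nu).
pose NP := INR #|{: 'I_M * 'I_K}|.
have hNP : 0 <= NP by apply: pos_INR.
have S0 : forall nu, 0 <= S nu <= NP * (2 * C).
  move=> nu; split; first by apply: sum_ge0.
  rewrite /NP -sum_const_fin; apply: sum_le => p _; exact: spC.
pose eta := kappa ^ (I * B) * delta / INR I.
pose Kp := INR I * INR I * Kc / delta.
have Srec : forall t, S (t + I * B)%nat <= (1 - eta) * S t +
   (NP * (2 * Kp)) * \big[Rplus/0]_(0 <= r < I * B) gamma (t + r)%nat.
  move=> t.
  apply: Rle_trans (_ : \big[Rplus/0]_(p : 'I_M * 'I_K) ((1 - eta) * sp t p +
      2 * Kp * \big[Rplus/0]_(0 <= r < I * B) gamma (t + r)%nat) <= _).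
    apply: sum_le => p _.
    exact: (spread_step H B HB HBconn phi Hphi' delta hdelta Hlow Hup
      (fun nu i => D nu i p) (fun nu i => U nu i p) gamma Kc (fun nu i => Hdeq nu i p) (Hud p)
      t (ia t p) (ib t p) (fun j => conj (hib t p j) (hia t p j))
      (ia (t + I * B)%nat p) (ib (t + I * B)%nat p)).
  rewrite big_split sum_scal sum_const_fin; fixR. rewrite -/NP -/(S t).
  set Sg := \big[Rplus/0]_(0 <= r < I * B) gamma (t + r)%nat.
  apply: Req_le; ring.
have [lg hlg] := Hgsq.
have gsq : forall N, \big[Rplus/0]_(0 <= t < N) gamma t ^ 2 <= lg :=
  bounded_of_cv (fun k => gamma k ^ 2) lg (fun t => pow2_ge_0 _) hlg.
have kl1 := kappa_le1 H i0.
have hkL : kappa ^ (I * B) <= 1.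
  rewrite -(pow1 (I * B)); apply: pow_incr; lra.
have hI1 : 1 <= INR I by apply: (le_INR 1); apply/leP.
have heta : 0 < eta <= 1.
  rewrite /eta /delta; split.
    apply: Rmult_lt_0_compat; [apply: Rmult_lt_0_compat; exact: pow_lt|].
    exact: Rinv_0_lt_compat.
  have h1 : kappa ^ (I * B) * kappa ^ (I * B) <= 1.
    have := pow_lt _ (I * B) Hkappa. nra.
  apply: (Rmult_le_reg_r (INR I)); first lra.
  rewrite /Rdiv Rmult_assoc Rinv_l; lra.
have hKp : 0 <= Kp.
  rewrite /Kp /Kc; apply: Rmult_le_pos; last by apply: Rlt_le; apply: Rinv_0_lt_compat.
  apply: Rmult_le_pos; [nra|lra].
have gpos : forall t, 0 <= gamma t by move=> t; have := Hgamma t; lra.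
have LB : (0 < I * B)%nat by rewrite muln_gt0 HI HB.
have [Cst hCst] := series_main S gamma (I * B) (1 - eta) (NP * (2 * Kp)) (NP * (2 * C)) lg
  LB ltac:(lra) ltac:(nra) S0 gpos gsq Srec.
pose NQ := INR #|{: ('I_I * 'I_M) * 'I_K}|.
have hNQ : 0 <= NQ by apply: pos_INR.
have errD : forall nu, nrm (vsub (stack (D nu)) (kron1 (wavg (phi nu) (D nu)))) ^ 2
    <= NQ * S nu ^ 2.
  move=> nu; apply: err_bound => //; first exact: (proj1 (S0 nu)).
  move=> pp; exists (D nu (ib nu pp) pp), (D nu (ia nu pp) pp); split; first exact: spS.
  by move=> j; split; [apply: hib|apply: hia].
have errU : forall nu, nrm (vsub (stack (U nu)) (kron1 (wavg (phi nu) (U nu)))) ^ 2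
    <= NQ * (S nu + 2 * (Kc * gamma nu)) ^ 2.
  move=> nu; apply: err_bound => //.
    have := proj1 (S0 nu); have := Hud p0 nu i0; have := Rabs_pos (U nu i0 p0 - D nu i0 p0); lra.
  move=> pp; exists (D nu (ib nu pp) pp - Kc * gamma nu), (D nu (ia nu pp) pp + Kc * gamma nu).
  split; first by have := spS nu pp; rewrite /sp; lra.
  move=> j; have := abs_between _ _ (Hud pp nu j); have := hib nu pp j; have := hia nu pp j; lra.
have c2 : exists l, Un_cv (fun N => sum_f_R0 (fun t =>
      nrm (vsub (stack (D t.+1)) (kron1 (wavg (phi t.+1) (D t.+1)))) ^ 2) N) l.
  apply: (cv_of_bounded _ (NQ * Cst)); first by move=> t; apply: pow2_ge_0.
  move=> N; apply: Rle_trans (_ : \big[Rplus/0]_(0 <= t < N) (NQ * S t.+1 ^ 2) <= _).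
    apply: sum_le => t _; exact: errD.
  rewrite sum_scal; apply: Rmult_le_compat_l => //.
  have := sum_shift_le (fun t => S t ^ 2) Cst 1 N (fun t => pow2_ge_0 _) hCst.
  move=> h; apply: Rle_trans h; apply: Req_le; apply: eq_bigr => t _; by rewrite addn1.
have c3 : exists l, Un_cv (fun N => sum_f_R0 (fun t =>
      nrm (vsub (stack (U t.+1)) (kron1 (wavg (phi t.+1) (U t.+1)))) ^ 2) N) l.
  apply: (cv_of_bounded _ (NQ * (2 * Cst + 8 * Kc ^ 2 * lg))); first by move=> t; apply: pow2_ge_0.
  move=> N; apply: Rle_trans (_ : \big[Rplus/0]_(0 <= t < N)
      (NQ * (2 * S t.+1 ^ 2 + 8 * Kc ^ 2 * gamma t.+1 ^ 2)) <= _).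
    apply: sum_le => t _; apply: Rle_trans (errU t.+1) _.
    apply: Rmult_le_compat_l => //.
    have : 0 <= (S t.+1 - 2 * (Kc * gamma t.+1)) ^ 2 by apply: pow2_ge_0.
    move=> h; nra.
  rewrite sum_scal; apply: Rmult_le_compat_l => //.
  rewrite big_split sum_scal sum_scal; fixR.
  have h1 := sum_shift_le (fun t => S t ^ 2) Cst 1 N (fun t => pow2_ge_0 _) hCst.
  have h2 := sum_shift_le (fun t => gamma t ^ 2) lg 1 N (fun t => pow2_ge_0 _) gsq.
  have e1 : \big[Rplus/0]_(0 <= t < N) S t.+1 ^ 2 =
      \big[Rplus/0]_(0 <= t < N) (fun t => S t ^ 2) (t + 1)%nat.
    by apply: eq_bigr => t _; rewrite addn1.
  have e2 : \big[Rplus/0]_(0 <= t < N) gamma t.+1 ^ 2 =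
      \big[Rplus/0]_(0 <= t < N) (fun t => gamma t ^ 2) (t + 1)%nat.
    by apply: eq_bigr => t _; rewrite addn1.
  rewrite e1 e2.
  have hk : 0 <= 8 * Kc ^ 2 by nra.
  move: h1 h2.
  set a := \big[Rplus/0]_(0 <= t < N) (fun t => S t ^ 2) (t + 1)%nat.
  set b := \big[Rplus/0]_(0 <= t < N) (fun t => gamma t ^ 2) (t + 1)%nat.
  move=> h1 h2. nra.
split; last by split.
apply: (sq_terms_to0 (fun nu => nrm (vsub (stack (D nu)) (kron1 (wavg (phi nu) (D nu)))))).
  by move=> t; apply: sqrt_pos.
exact: c2.
Qed.
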